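(* Let $n\geq1$, $J=\{[1,2],[3,4],\ldots,[2n-1,2n]\}$, and $A\in{\cal M}_{2n}$. Let $C_1,\ldots,C_t$ be the connected components of the spanning subgraph of $K_{2n}$ with edge set $J\cup A$, with $C_t$ containing the edge $[2n-1,2n]$. Let $2\mu_i$ be the number of vertices of $C_i$, so that $\{2\mu_1,\ldots,2\mu_t\}$ is the multiset of parts of $d(J,A)$. (i) Let $s$ be a vertex of $C_j$ for some $j\in\{1,\ldots,t-1\}$, and put $A'=(s,2n-1)\cdot A$. Then the multiset of parts of $d(A',J)$ is $(\{2\mu_1,\ldots,2\mu_t\}\setminus\{2\mu_j,2\mu_t\})\cup\{2(\mu_j+\mu_t)\}$, and $2(\mu_j+\mu_t)$ is the number of vertices of the component of $A'\cup J$ containing $[2n-1,2n]$. (ii) Traverse the vertices of the alternating cycle $C_t$ in cyclic order, starting at $2n$ and going next to $2n-1$, and list them as $2n,2n-1,i_1,i_2,\ldots,i_{2k-1},i_{2k}$, where $k\geq0$ and $2\mu_t=2k+2$. Let $j\in\{1,\ldots,k\}$. (a) If $A'=(i_{2j},2n-1)\cdot A$, then the multiset of parts of $d(A',J)$ is $\{2\mu_1,\ldots,2\mu_{t-1},2\mu_t-2j,2j\}$, and $2\mu_t-2j$ is the number of vertices of the component of $A'\cup J$ containing $[2n-1,2n]$. (b) If $A'=(i_{2j-1},2n-1)\cdot A$, then the multiset of parts of $d(A',J)$ is $\{2\mu_1,\ldots,2\mu_t\}$, and $2\mu_t$ is the number of vertices of the component of $A'\cup J$ containing $[2n-1,2n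]$.
   Context: $K_{2n}$ is the complete graph on $\{1,\ldots,2n\}$, $[i,j]$ denotes the edge joining $i$ and $j$, and ${\cal M}_{2n}$ is the set of perfect matchings of $K_{2n}$. For $A,B\in{\cal M}_{2n}$, $d(A,B)$ is the partition of $2n$ whose parts are the numbers of vertices of the connected components of the spanning subgraph with edge set $A\cup B$. The components of $J\cup A$ are alternating cycles, or single edges common to $J$ and $A$. A permutation $\sigma\in S_{2n}$ acts on matchings by relabelling vertices: $\sigma\cdot A=\{[\sigma(a),\sigma(b)]:[a,b]\in A\}$. $(s,2n-1)$ denotes the transposition of $s$ and $2n-1$. *)

(* Defs.v *)
(* Vertex k+1 of K_{2n} is represented by (k : 'I_(2*n)). *)
From mathcomp Require Import all_boot fingroup perm.
Set Implicit Arguments. Unset Strict Implicit. Unset Printing Implicit Defensive.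

Section Matchings.
Variable T : finType.

Definition is_pm (A : {set {set T}}) : bool :=
  [forall e in A, #|e| == 2] && [forall x, #|[set e in A | x \in e]| == 1].

Definition mact (sigma : {perm T}) (A : {set {set T}}) : {set {set T}} :=
  [set [set sigma x | x in e] | e : {set T} in A].

Definition ugraph (A B : {set {set T}}) : rel T :=
  fun x y => (x != y) && [exists e in A :|: B, (x \in e) && (y \in e)].

Definition ucomp (A B : {set {set T}}) (x : T) : {set T} :=
  [set y | connect (ugraph A B) x y].

Definition comps (A B : {set {set T}}) : {set {set T}} :=
  [set ucomp A B x | x in T].

(* d(A,B), as the (unordered) list of its parts: the numbers of vertices of
   the components of A ∪ B; multisets are compared with perm_eq *)
Definition parts (A B : {set {set T}}) : seq nat :=
  map (fun C : {set T} => #|C|) (enum (comps A B)).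

End Matchings.

(* J = {[1,2],[3,4],...,[2n-1,2n]} : 0-based vertices x,y are J-matched iff x/2 = y/2 *)
Definition Jm (n : nat) : {set {set 'I_(2*n)}} :=
  [set [set y : 'I_(2*n) | y./2 == x./2] | x : 'I_(2*n)].

(* Main.v *)
Require Import Defs.
From mathcomp Require Import all_boot fingroup perm zify.
Set Implicit Arguments. Unset Strict Implicit. Unset Printing Implicit Defensive.

Lemma nat_par i : exists a, i = 2*a \/ i = (2*a).+1.
Proof. exists (i %/ 2); lia. Qed.

Lemma perm_rem' (T : eqType) (x : T) (s1 s2 : seq T) :
  perm_eq s1 s2 -> perm_eq (rem x s1) (rem x s2).
Proof.
move=> P; case: (boolP (x \in s1)) => xs1.
  have xs2 : x \in s2 by rewrite -(perm_mem P).
  have h1 := perm_to_rem xs1; have h2 := perm_to_rem xs2.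
  rewrite perm_sym in h1; rewrite -(perm_cons x).
  exact: perm_trans h1 (perm_trans P h2).
have xs2 : x \notin s2 by rewrite -(perm_mem P).
by rewrite !rem_id.
Qed.

Section Gen.
Variable T : finType.
Implicit Types (f g : T -> T) (x y z : T).

Definition fg f g : rel T := fun x y => (y == f x) || (y == g x).
Definition fcomp f g x : {set T} := [set y | connect (fg f g) x y].
Definition Kc f g : {set {set T}} := [set fcomp f g x | x in T].

Lemma fg_sym f g : involutive f -> involutive g -> symmetric (fg f g).
Proof.
move=> If Ig x y; rewrite /fg.
have E h : involutive h -> (y == h x) = (x == h y).
  by move=> Ih; apply/eqP/eqP=> ->; rewrite Ih.
by rewrite (E f If) (E g Ig).
Qed.

Lemma fcompC f g x : fcomp f g x = fcomp g f x.
Proof.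
apply/setP=> y; rewrite !inE; apply: eq_connect => a b; exact: orbC.
Qed.

Lemma fcomp_self f g x : x \in fcomp f g x.
Proof. by rewrite inE connect0. Qed.

Lemma fcomp_closed f g x y : y \in fcomp f g x -> (f y \in fcomp f g x) /\ (g y \in fcomp f g x).
Proof.
rewrite !inE => H; split; apply: connect_trans H _; apply: connect1; by rewrite /fg eqxx ?orbT.
Qed.

Lemma fcomp_sub f g (S : {set T}) x : x \in S ->
  (forall y, y \in S -> (f y \in S) /\ (g y \in S)) -> fcomp f g x \subset S.
Proof.
move=> xS cl; apply/subsetP=> y; rewrite inE => /connectP [p pth ->] {y}.
elim: p x xS pth => //= z p IH x xS /andP [Gxz pth]; apply: IH pth.
by case/orP: Gxz => /eqP ->; case: (cl x xS).
Qed.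

Lemma fcomp_eq f g x y : involutive f -> involutive g ->
  y \in fcomp f g x -> fcomp f g y = fcomp f g x.
Proof.
move=> If Ig; rewrite inE => cxy; apply/setP=> z; rewrite !inE.
have sym := sym_connect_sym (fg_sym If Ig).
apply/idP/idP => H; first exact: connect_trans cxy H.
by apply: connect_trans H; rewrite sym.
Qed.

Lemma fcomp_same f g f' g' x :
  (forall y, y \in fcomp f g x -> f' y = f y /\ g' y = g y) ->
  fcomp f' g' x = fcomp f g x.
Proof.
move=> H.
have S1 : fcomp f' g' x \subset fcomp f g x.
  apply: fcomp_sub; first exact: fcomp_self.
  by move=> y /[dup] /H [-> ->]; apply: fcomp_closed.
apply/eqP; rewrite eqEsubset S1 /=.
apply: fcomp_sub; first exact: fcomp_self.
move=> y Hy; have := fcomp_closed Hy; have [<- <-] := H y (subsetP S1 y Hy).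
done.
Qed.

Lemma fcomp_disj f g x z y : involutive f -> involutive g ->
  x \notin fcomp f g z -> y \in fcomp f g x -> y \notin fcomp f g z.
Proof.
move=> If Ig xz yx; apply/negP => yz.
move: xz; rewrite -(fcomp_eq If Ig yz) (fcomp_eq If Ig yx) fcomp_self //.
Qed.

Definition acyc f g m (c : nat -> T) :=
  [/\ 0 < m, (forall a, a < m -> c (2*a).+1 = f (c (2*a))),
      (forall a, a.+1 < m -> c (2*a).+2 = g (c (2*a).+1)) & c 0 = g (c (2*m).-1)].

Definition cset N (c : nat -> T) : {set T} := [set c (nat_of_ord i) | i : 'I_N].

Lemma csetP N c y : reflect (exists2 i, i < N & y = c i) (y \in cset N c).
Proof.
apply: (iffP imsetP) => [[i _ ->]|[i iN ->]]; first by exists i.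
by exists (Ordinal iN).
Qed.

Lemma cset_mem N c i : i < N -> c i \in cset N c.
Proof. by move=> iN; apply/csetP; exists i. Qed.

Lemma card_cset N c : {in gtn N &, injective c} -> #|cset N c| = N.
Proof.
move=> inj; rewrite card_imset ?card_ord // => i j E; apply: val_inj; apply: inj E;
  rewrite inE ?ltn_ord //= ; exact: ltn_ord.
Qed.

Lemma acyc_comp f g m c i : involutive f -> involutive g -> acyc f g m c -> i < 2*m ->
  fcomp f g (c i) = cset (2*m) c.
Proof.
move=> If Ig [m0 Hf Hg Hw] im.
have cl : forall y, y \in cset (2*m) c -> (f y \in cset (2*m) c) /\ (g y \in cset (2*m) c).
  move=> y /csetP [i' i'm ->]; have [a [Ea|Ea]] := nat_par i'; subst i'.
    split; first by rewrite -Hf; [apply: cset_mem; lia | lia].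
    case: a i'm => [|a] i'm.
      by rewrite Hw Ig; apply: cset_mem; lia.
    have -> : 2 * a.+1 = (2*a).+2 by lia.
    by rewrite Hg ?Ig; [apply: cset_mem; lia | lia].
  split; first by rewrite Hf ?If; [apply: cset_mem; lia | lia].
  case: (ltnP a.+1 m) => am.
    by rewrite -Hg //; apply: cset_mem; lia.
  have -> : (2*a).+1 = (2*m).-1 by lia.
  by rewrite -Hw; apply: cset_mem; lia.
have con : forall i, i < 2*m -> connect (fg f g) (c 0) (c i).
  elim=> [|k IH] im'; first exact: connect0.
  apply: connect_trans (IH _) _; first lia.
  apply: connect1; have [a [E|E]] := nat_par k; subst k; rewrite /fg.
    by rewrite Hf ?eqxx //; lia.
  by rewrite Hg ?eqxx ?orbT //; lia.
apply/eqP; rewrite eqEsubset fcomp_sub ?cset_mem //=.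
apply/subsetP => y /csetP [k km ->]; rewrite inE.
have sym := sym_connect_sym (fg_sym If Ig).
by apply: connect_trans (con k km); rewrite sym; apply: con.
Qed.

End Gen.

Section PermSets.
Variable X : finType.
Variable w : X -> nat.

Lemma enum_D1 (S : {set X}) Z : Z \in S -> perm_eq (enum S) (Z :: enum (S :\ Z)).
Proof.
move=> ZS; apply: uniq_perm; first exact: enum_uniq.
  by rewrite /= mem_enum !inE eqxx enum_uniq.
by move=> y; rewrite inE !mem_enum !inE; case: eqP => // ->.
Qed.

Lemma enum_U1 (S : {set X}) Z : Z \notin S -> perm_eq (enum (Z |: S)) (Z :: enum S).
Proof.
move=> ZS; apply: uniq_perm; first exact: enum_uniq.
  by rewrite /= mem_enum ZS enum_uniq.
by move=> y; rewrite inE !mem_enum !inE.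
Qed.

Lemma perm_merge (K K' : {set X}) A B D : A \in K -> B \in K -> A != B ->
  D \notin (K :\ A) :\ B -> K' = D |: ((K :\ A) :\ B) ->
  perm_eq (map w (enum K')) (w D :: rem (w B) (rem (w A) (map w (enum K)))).
Proof.
move=> AK BK AB DR ->.
apply: perm_trans (perm_map w (enum_U1 DR)) _; rewrite /= perm_cons.
have P1 : perm_eq (map w (enum K)) (w A :: w B :: map w (enum ((K :\ A) :\ B))).
  have := perm_map w (enum_D1 AK); move/perm_trans; apply.
  have BK' : B \in K :\ A by rewrite !inE eq_sym AB.
  by rewrite /= perm_cons; exact: (perm_map w (enum_D1 BK')).
have P2 := perm_rem' (w A) P1; rewrite /= eqxx in P2.
have P3 := perm_rem' (w B) P2; rewrite /= eqxx in P3.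
by rewrite perm_sym.
Qed.

Lemma perm_split (K K' : {set X}) A D1 D2 : A \in K -> D2 \notin K :\ A ->
  D1 \notin D2 |: (K :\ A) -> K' = D1 |: (D2 |: (K :\ A)) ->
  perm_eq (map w (enum K')) (w D1 :: w D2 :: rem (w A) (map w (enum K))).
Proof.
move=> AK D2R D1R ->.
apply: perm_trans (perm_map w (enum_U1 D1R)) _; rewrite /= perm_cons.
apply: perm_trans (perm_map w (enum_U1 D2R)) _; rewrite /= perm_cons.
have P1 := perm_rem' (w A) (perm_map w (enum_D1 AK)); rewrite /= eqxx in P1.
by rewrite perm_sym.
Qed.
End PermSets.

Section Cons.
Variable T : finType.
Variables (f g : T -> T).
Hypotheses (If : involutive f) (Ig : involutive g) (Ff : forall x, f x != x) (Fg : forall x, g x != x).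
Let p := g \o f.

Lemma p_inj : injective p.
Proof. exact: inj_comp (inv_inj Ig) (inv_inj If). Qed.

Lemma iter_pfp s y : iter s p (f (iter s p y)) = f y.
Proof.
elim: s => // s IH; rewrite iterSr iterS /p /= If Ig; exact: IH.
Qed.

Lemma iter_inj s : injective (iter s p).
Proof. elim: s => // s IH x y /=; move/p_inj; exact: IH. Qed.

Lemma iter_neq d y : iter d p y != f y.
Proof.
apply/eqP => E; have [s [Es|Es]] := nat_par d; subst d.
  have : iter s p (f (iter s p y)) = iter s p (iter s p y).
    rewrite iter_pfp -E -(iterD s s); have -> : (2*s) = s + s by lia.
    done.
  by move/(@iter_inj s) => /eqP; rewrite (negbTE (Ff _)).
have : iter s p (f (iter s p y)) = iter s p (p (iter s p y)).
  rewrite iter_pfp -E -(iterSr s) -(iterD s.+1 s); have -> : (2*s).+1 = s.+1 + s by lia.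
  done.
move/(@iter_inj s) => /esym /eqP; rewrite /p /= (negbTE (Fg _)) //.
Qed.

Definition cc x i := if odd i then f (iter i./2 p x) else iter i./2 p x.

Lemma cc_even x a : cc x (2*a) = iter a p x.
Proof. by rewrite /cc mul2n odd_double doubleK. Qed.
Lemma cc_odd x a : cc x (2*a).+1 = f (iter a p x).
Proof. by rewrite /cc mul2n /= odd_double /= uphalf_double. Qed.

Lemma cons_acyc x : exists m c, [/\ acyc f g m c, c 0 = x & {in gtn (2*m) &, injective c}].
Proof.
have m0 := fingraph.order_gt0 p x.
exists (fingraph.order p x), (cc x); split.
- split => //.
  + by move=> a _; rewrite cc_odd cc_even.
  + move=> a _; have -> : (2*a).+2 = 2*a.+1 by lia.
    by rewrite cc_even cc_odd.
  + have -> : (2 * fingraph.order p x).-1 = (2 * (fingraph.order p x).-1).+1 by lia.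
    rewrite cc_odd (cc_even x 0) /=.
    have -> : g (f (iter (fingraph.order p x).-1 p x)) = iter (fingraph.order p x) p x.
      by rewrite -(orderSpred p x) iterS.
    by rewrite iter_order //; exact: p_inj.
- by rewrite (cc_even x 0).
- move=> i j; rewrite !inE => im jm.
  have [a [Ea|Ea]] := nat_par i; have [b [Eb|Eb]] := nat_par j; subst i j;
    rewrite ?cc_even ?cc_odd.
  + move=> E; have : findex p x (iter a p x) = findex p x (iter b p x) by rewrite E.
    rewrite !findex_iter; [lia|lia|lia].
  + move=> E; case: (leqP b a) => ab.
      have : iter (a - b) p (iter b p x) = f (iter b p x) by rewrite -iterD subnK.
      by move/eqP; rewrite (negbTE (iter_neq _ _)).
    have : iter (b - a) p (iter a p x) = f (iter a p x).
      rewrite -iterD subnK; [by rewrite E If | lia].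
    by move/eqP; rewrite (negbTE (iter_neq _ _)).
  + move=> E; case: (leqP a b) => ab.
      have : iter (b - a) p (iter a p x) = f (iter a p x) by rewrite -iterD subnK.
      by move/eqP; rewrite (negbTE (iter_neq _ _)).
    have : iter (a - b) p (iter b p x) = f (iter b p x).
      rewrite -iterD subnK; [by rewrite -E If | lia].
    by move/eqP; rewrite (negbTE (iter_neq _ _)).
  + move/(inv_inj If) => E; have : findex p x (iter a p x) = findex p x (iter b p x) by rewrite E.
    rewrite !findex_iter; [lia|lia|lia].
Qed.

End Cons.

Section Cyc.
Variable T : finType.
Variables (f g : T -> T).
Hypotheses (If : involutive f) (Ig : involutive g).

Lemma cycle_acyc (L : seq T) x0 m : size L = 2*m -> 1 < m -> uniq L ->
  path.cycle (fg f g) L -> nth x0 L 1 = f (nth x0 L 0) -> acyc f g m (nth x0 L).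
Proof.
case: L => [|x s] sL m1 uL cL h1; first by move: sL => /=; lia.
set c := nth x0 (x :: s).
have cinj : forall i j, i < 2*m -> j < 2*m -> c i = c j -> i = j.
  by move=> i j im jm /eqP; rewrite nth_uniq ?sL // => /eqP.
have E : forall i, i < 2*m -> fg f g (c i) (c ((i.+1) %% (2*m))).
  move=> i im; have sz : i < size (rcons s x) by rewrite size_rcons; move: sL => /=; lia.
  move/(pathP x0): cL => /(_ i sz); rewrite -rcons_cons !nth_rcons /=.
  have ss : (size s).+1 = 2*m by move: sL.
  rewrite ss im /c.
  case: ltngtP => [ilt|igt|ieq]; last first.
  - have -> : i.+1 %% (2*m) = 0 by rewrite ieq ss modnn.
    by rewrite ieq nth_last.
  - exfalso; lia.
    by have -> : i.+1 %% (2*m) = i.+1 by apply: modn_small; lia.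
have step : forall i, i.+1 < 2*m -> c i.+1 = (if odd i then g else f) (c i).
  elim=> [|i IH] im; first by [].
  have IH' := IH (ltnW im).
  have := E i.+1 (ltnW im); rewrite modn_small // /fg.
  have back : (if odd i then g else f) (c i.+1) = c i.
    by rewrite IH'; case: (odd i); rewrite ?If ?Ig.
  case/orP => /eqP H; case Oi: (odd i) back => /= back; rewrite /= Oi /=; try exact: H;
    exfalso; have := cinj i.+2 i im ltac:(lia); rewrite H back; move/(_ erefl); lia.
split.
- lia.
- move=> a am; rewrite step; last lia.
  by rewrite oddM andFb.
- move=> a am; rewrite step; last lia.
  by rewrite /= oddM andFb.
- have := E (2*m).-1 ltac:(lia).
  have -> : ((2*m).-1).+1 %% (2*m) = 0 by rewrite prednK ?modnn //; lia.
  have sm : (2*m).-1 = (2*(m.-1)).+1 by lia.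
  have H := step (2*(m.-1)) ltac:(lia).
  rewrite /= oddM andFb in H.
  rewrite /fg sm H If => /orP [/eqP H0|/eqP -> //].
  have := cinj 0 (2*m.-1) ltac:(lia) ltac:(lia); rewrite H0 => /(_ erefl); lia.
Qed.
End Cyc.

Section Partner.
Variable T : finType.

Lemma partner (R : rel T) : (forall x, exists y, R x y) ->
  (forall x y z, R x y -> R x z -> y = z) -> symmetric R -> (forall x, ~~ R x x) ->
  exists f, [/\ forall x y, R x y = (y == f x), involutive f & forall x, f x != x].
Proof.
move=> ex un sy irr.
pose f x := odflt x [pick y | R x y].
have Rf : forall x, R x (f x).
  move=> x; rewrite /f; case: pickP => [y //|H]; have [y Ry] := ex x.
  by rewrite H in Ry.
have RE : forall x y, R x y = (y == f x).
  move=> x y; apply/idP/eqP => [H|->]; [exact: un H (Rf x) | exact: Rf].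
exists f; split => //.
- by move=> x; apply/esym/eqP; rewrite -RE sy Rf.
- by move=> x; apply/eqP => E; have := Rf x; rewrite E (negbTE (irr _)).
Qed.

Definition Rel (A : {set {set T}}) : rel T :=
  fun x y => (x != y) && [exists e in A, (x \in e) && (y \in e)].

Lemma pm_partner A : is_pm A ->
  exists f, [/\ forall x y, Rel A x y = (y == f x), involutive f & forall x, f x != x].
Proof.
case/andP => /forall_inP c2 /forallP c1.
apply: partner.
- move=> x; move: (c1 x) => /cards1P [e He].
  have : e \in [set e in A | x \in e] by rewrite He inE.
  rewrite inE => /andP [eA xe].
  move: (c2 e eA) => /cards2P [a [b [ab Eab]]].
  move: xe; rewrite Eab !inE => /orP [] /eqP ->.
    by exists b; rewrite /Rel ab /=; apply/existsP; exists [set a; b]; rewrite -Eab eA Eab !inE !eqxx ?orbT.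
  by exists a; rewrite /Rel eq_sym ab /=; apply/existsP; exists [set a; b]; rewrite -Eab eA Eab !inE !eqxx ?orbT.
- move=> x y z /andP [xy /exists_inP [e eA /andP [xe ye]]] /andP [xz /exists_inP [e' eA' /andP [xe' ze']]].
  move: (c1 x) => /cards1P [e0 He].
  have : e \in [set e in A | x \in e] by rewrite inE eA xe.
  have : e' \in [set e in A | x \in e] by rewrite inE eA' xe'.
  rewrite He !inE => /eqP E' /eqP E; subst e e'.
  move: (c2 e0 eA) => /cards2P [a [b [ab Eab]]].
  move: xe ye ze' xy xz; rewrite Eab !inE.
  by do 3 (case/orP => /eqP ->); rewrite ?eqxx.
- move=> x y; rewrite /Rel eq_sym; congr (_ && _).
  by apply/exists_inP/exists_inP => [] [e eA /andP [h1 h2]]; exists e => //; rewrite h1 h2.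
- by move=> x; rewrite /Rel eqxx.
Qed.

Lemma mact_partner A fA (s : {perm T}) : (forall x y, Rel A x y = (y == fA x)) ->
  forall x y, Rel (mact s A) x y = (y == s (fA (s^-1 x)))%g.
Proof.
move=> HA x y.
have -> : Rel (mact s A) x y = Rel A (s^-1 x)%g (s^-1 y)%g.
  rewrite /Rel (inj_eq (@perm_inj _ _)); congr (_ && _).
  apply/exists_inP/exists_inP => [[e' /imsetP [e eA ->] /andP [h1 h2]]|[e eA /andP [h1 h2]]].
    exists e => //; move: h1 h2 => /imsetP [a ae ->] /imsetP [b be ->]; by rewrite !permK ae be.
  exists [set s z | z in e]; first by apply/imsetP; exists e.
  by apply/andP; split; apply/imsetP; [exists (s^-1 x)%g | exists (s^-1 y)%g]; rewrite ?permKV.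
rewrite HA; apply/eqP/eqP => [<-|->]; by rewrite ?permKV ?permK.
Qed.

Lemma ugraph_fg A B fA fB : (forall x y, Rel A x y = (y == fA x)) ->
  (forall x y, Rel B x y = (y == fB x)) -> ugraph A B =2 fg fA fB.
Proof.
move=> HA HB x y; rewrite /fg -HA -HB /ugraph /Rel -andb_orr; congr (_ && _).
apply/exists_inP/orP => [[e /setUP [] eA H]|[] /exists_inP [e eA H]].
- by left; apply/exists_inP; exists e.
- by right; apply/exists_inP; exists e.
- by exists e => //; rewrite inE eA.
- by exists e => //; rewrite inE eA orbT.
Qed.

Lemma ucomp_fcomp A B fA fB : (forall x y, Rel A x y = (y == fA x)) ->
  (forall x y, Rel B x y = (y == fB x)) -> ucomp A B =1 fcomp fA fB.
Proof.
move=> HA HB x; apply/setP => y; rewrite !inE; apply: eq_connect; exact: ugraph_fg.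
Qed.

Lemma comps_Kc A B fA fB : (forall x y, Rel A x y = (y == fA x)) ->
  (forall x y, Rel B x y = (y == fB x)) -> comps A B = Kc fA fB.
Proof. move=> HA HB; apply: eq_imset; exact: ucomp_fcomp. Qed.

End Partner.

Definition tw (T : finType) (u v : T) (h : T -> T) := fun y => tperm u v (h (tperm u v y)).

Section Main.
Variable T : finType.
Variables (jp ap : T -> T) (lst pen : T).
Hypotheses (Ij : involutive jp) (Ia : involutive ap) (Fj : forall x, jp x != x) (Fa : forall x, ap x != x).
Hypothesis jlst : jp lst = pen.
Implicit Types (u v y : T) (h : T -> T).

Lemma tperm_id (u v y : T) : y != u -> y != v -> tperm u v y = y.
Proof. by move=> h1 h2; rewrite tpermD 1?eq_sym. Qed.

Lemma tw_inv u v h : involutive h -> involutive (tw u v h).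
Proof. by move=> Ih y; rewrite /tw tpermK Ih tpermK. Qed.

Lemma tw_id u v h y : y != u -> y != v -> h y != u -> h y != v -> tw u v h y = h y.
Proof. by move=> h1 h2 h3 h4; rewrite /tw (tperm_id h1 h2) (tperm_id h3 h4). Qed.

Lemma tw_u u v h : tw u v h u = tperm u v (h v).
Proof. by rewrite /tw tpermL. Qed.
Lemma tw_v u v h : tw u v h v = tperm u v (h u).
Proof. by rewrite /tw tpermR. Qed.


Let Ct := fcomp jp ap pen.

Lemma pen_lst : pen != lst.
Proof. by rewrite -jlst Fj. Qed.

Lemma part_i s : s \notin Ct ->
  let ap' := tw s pen ap in
  perm_eq (map (fun C : {set T} => #|C|) (enum (Kc jp ap')))
     ((#|fcomp jp ap s| + #|Ct|) :: rem #|fcomp jp ap s| (rem #|Ct| (map (fun C : {set T} => #|C|) (enum (Kc jp ap)))))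
  /\ #|fcomp jp ap' pen| = #|fcomp jp ap s| + #|Ct|.
Proof.
move=> sCt ap'.
have Ia' : involutive ap' by apply: tw_inv.
have [mt [ct [[mt0 ctf ctg ctw] ct0 ctinj]]] := cons_acyc Ij Ia Fj Fa lst.
have act : acyc jp ap mt ct by rewrite /acyc; split.
have ct1 : ct 1 = pen by move: (ctf 0 mt0); rewrite muln0 ct0 jlst.
have CtE : Ct = cset (2*mt) ct by rewrite /Ct -ct1 (acyc_comp Ij Ia act) //; lia.
have [ms [cs [[ms0 csf csg csw] cs0 csinj]]] := cons_acyc Ij Ia Fj Fa (ap s).
have acs : acyc jp ap ms cs by rewrite /acyc; split.
have csl : cs (2*ms).-1 = s by apply: (inv_inj Ia); rewrite -csw.
have CsE : fcomp jp ap s = cset (2*ms) cs by rewrite -csl (acyc_comp Ij Ia acs) //; lia.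
have dis : forall y, y \in fcomp jp ap s -> y \notin Ct.
  by move=> y ys; apply: (fcomp_disj Ij Ia sCt).
have ctin : forall i, i < 2*mt -> ct i \in Ct by move=> i im; rewrite CtE cset_mem.
have csin : forall i, i < 2*ms -> cs i \in fcomp jp ap s by move=> i im; rewrite CsE cset_mem.
have csnct : forall i j, i < 2*ms -> j < 2*mt -> cs i != ct j.
  move=> i j im jm; apply/eqP => E; have := dis _ (csin i im); rewrite E ctin //.
have ctns : forall i, i < 2*mt -> ct i != s.
  by move=> i im; rewrite -csl eq_sym csnct //; lia.
have csnp : forall i, i < 2*ms -> cs i != pen.
  by move=> i im; rewrite -ct1 csnct //; lia.
have ap'pen : ap' pen = ap s.
  rewrite /ap' tw_v tperm_id ?Fa //; rewrite -cs0 csnp //; lia.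
have ap's : ap' s = ap pen.
  rewrite /ap' tw_u tperm_id ?Fa //; apply/eqP => E; move: sCt; rewrite -E.
  by have [_ ->] := fcomp_closed (fcomp_self jp ap pen).
have ap'id : forall y, y != s -> y != pen -> ap y != s -> ap y != pen -> ap' y = ap y.
  by move=> y h1 h2 h3 h4; rewrite /ap' tw_id.
pose d i := if i < 2 then ct i else if i < 2*ms+2 then cs (i-2) else ct (i - 2*ms).
have dA : forall i, i < 2 -> d i = ct i by move=> i h; rewrite /d h.
have dB : forall i, 2 <= i -> i < 2*ms+2 -> d i = cs (i-2).
  by move=> i h1 h2; rewrite /d h2 ifN // -leqNgt.
have dC : forall i, 2*ms+2 <= i -> d i = ct (i - 2*ms).
  by move=> i h; rewrite /d ifN ?ifN // -leqNgt //; lia.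
have ad : acyc jp ap' (mt+ms) d.
  split.
  - lia.
  - move=> a am; case: (posnP a) => [->|a0]; first by rewrite muln0 (dA 1) // (dA 0) // ct1 -jlst -ct0.
    case: (leqP a ms) => ams.
      rewrite !dB; try lia.
      have -> : (2*a).+1 - 2 = (2*(a-1)).+1 by lia.
      have -> : (2*a) - 2 = (2*(a-1)) by lia.
      by rewrite csf //; lia.
    rewrite !dC; try lia.
    have -> : (2*a).+1 - 2*ms = (2*(a-ms)).+1 by lia.
    have -> : (2*a) - 2*ms = (2*(a-ms)) by lia.
    by rewrite ctf //; lia.
  - move=> a am; case: (posnP a) => [->|a0].
      rewrite muln0 (dA 1) // (dB 2) //; last lia.
      by rewrite ct1 ap'pen -cs0.
    case: (ltngtP a ms) => ams.
    + rewrite !dB; try lia.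
      have -> : (2*a).+2 - 2 = (2*(a-1)).+2 by lia.
      have -> : (2*a).+1 - 2 = (2*(a-1)).+1 by lia.
      rewrite csg; last lia.
      rewrite ap'id //.
      * by rewrite -csl; apply/eqP => /csinj; rewrite !inE; lia.
      * by apply: csnp; lia.
      * rewrite -csg; last lia.
        by rewrite -csl; apply/eqP => /csinj; rewrite !inE; lia.
      * rewrite -csg; last lia.
        by apply: csnp; lia.
    + rewrite !dC; try lia.
      have -> : (2*a).+2 - 2*ms = (2*(a-ms)).+2 by lia.
      have -> : (2*a).+1 - 2*ms = (2*(a-ms)).+1 by lia.
      rewrite ctg; last lia.
      rewrite ap'id //.
      * by apply: ctns; lia.
      * by rewrite -ct1; apply/eqP => /ctinj; rewrite !inE; lia.
      * rewrite -ctg; last lia.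
        by apply: ctns; lia.
      * rewrite -ctg; last lia.
        by rewrite -ct1; apply/eqP => /ctinj; rewrite !inE; lia.
    + subst a; rewrite dC ?dB; try lia.
      have -> : (2*ms).+2 - 2*ms = (2*0).+2 by lia.
      have -> : (2*ms).+1 - 2 = (2*ms).-1 by lia.
      by rewrite csl ap's ctg ?muln0 ?ct1 //; lia.
  - rewrite dA //; case: (ltnP 1 mt) => mt1.
      rewrite dC; last lia.
      have -> : (2*(mt+ms)).-1 - 2*ms = (2*mt).-1 by lia.
      rewrite ap'id -?ctw ?ct0 //.
      * by apply: ctns; lia.
      * by rewrite -ct1; apply/eqP => /ctinj; rewrite !inE; lia.
      * by rewrite -ct0; apply: ctns; lia.
      * by rewrite eq_sym pen_lst.
    rewrite dB; try lia.
    have -> : (2*(mt+ms)).-1 - 2 = (2*ms).-1 by lia.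
    by rewrite csl ap's -ct1 ctw; have -> : (2*mt).-1 = 1 by lia.
have dinj : {in gtn (2*(mt+ms)) &, injective d}.
  move=> i j; rewrite !inE => im jm.
  case: (ltnP i 2) => i2; [rewrite dA // | case: (ltnP i (2*ms+2)) => i3; [rewrite dB // | rewrite dC //]];
  (case: (ltnP j 2) => j2; [rewrite dA // | case: (ltnP j (2*ms+2)) => j3; [rewrite dB // | rewrite dC //]]);
  try (by move/ctinj; rewrite !inE; lia); try (by move/csinj; rewrite !inE; lia);
  try (by move/eqP; rewrite (negbTE (csnct _ _ _ _)) //; lia);
  try (by move/esym/eqP; rewrite (negbTE (csnct _ _ _ _)) //; lia).
have dset : cset (2*(mt+ms)) d = fcomp jp ap s :|: Ct.
  apply/setP => y; rewrite inE CsE CtE; apply/csetP/orP.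
    move=> [i im ->].
    case: (ltnP i 2) => i2; [rewrite dA // | case: (ltnP i (2*ms+2)) => i3; [rewrite dB // | rewrite dC //]].
    + by right; apply: cset_mem; lia.
    + by left; apply: cset_mem; lia.
    + by right; apply: cset_mem; lia.
  case=> /csetP [i im ->].
    by exists (i+2); [lia | rewrite dB ?addnK //; lia].
  case: (ltnP i 2) => i2; first by exists i; [lia | rewrite dA].
  by exists (i + 2*ms); [lia | rewrite dC ?addnK //; lia].
have D1 : fcomp jp ap' pen = cset (2*(mt+ms)) d.
  by rewrite -ct1 -(dA 1) // (acyc_comp Ij Ia' ad) //; lia.
have compE : forall x, fcomp jp ap' x = if x \in fcomp jp ap s :|: Ct then fcomp jp ap' pen
                                       else fcomp jp ap x.
  move=> x; case: ifP => xin.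
    move: xin; rewrite -dset => /csetP [i im ->]; rewrite D1; exact: acyc_comp.
  move: xin; rewrite inE => /norP [xs xt].
  apply: fcomp_same => y yx; split => //.
  have [_ ayx] := fcomp_closed yx.
  have ys := fcomp_disj Ij Ia xs yx; have yt := fcomp_disj Ij Ia xt yx.
  have ays := fcomp_disj Ij Ia xs ayx; have ayt := fcomp_disj Ij Ia xt ayx.
  apply: ap'id; apply/eqP => E; move: ys yt ays ayt; rewrite E ?fcomp_self //.
have KE : Kc jp ap' = fcomp jp ap' pen |: ((Kc jp ap :\ Ct) :\ fcomp jp ap s).
  apply/setP => Z; rewrite in_setU1 !in_setD1; apply/imsetP/idP.
    move=> [x _ ->]; rewrite compE; case: ifP => xin; first by rewrite eqxx.
    move: xin; rewrite inE => /norP [xs xt].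
    apply/orP; right; apply/and3P; split.
    - by apply: contraNneq xs => <-; rewrite fcomp_self.
    - by apply: contraNneq xt => <-; rewrite fcomp_self.
    - by apply/imsetP; exists x.
  case/orP => [/eqP ->|/and3P [Zs Zt /imsetP [x _ Zx]]]; first by exists pen.
  exists x => //; rewrite Zx compE ifF //; apply/negbTE; rewrite inE; apply/norP; split.
    by apply: contra Zs => xs; rewrite Zx (fcomp_eq Ij Ia xs).
  by apply: contra Zt => xt; rewrite Zx (fcomp_eq Ij Ia xt).
have cardD : #|fcomp jp ap' pen| = #|fcomp jp ap s| + #|Ct|.
  rewrite D1 !card_cset // CsE CtE !card_cset //; lia.
split => //; rewrite -cardD; apply: perm_merge KE.
- by apply/imsetP; exists pen.
- by apply/imsetP; exists s.
- by apply: contraNneq sCt => ->; rewrite fcomp_self.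
- rewrite !in_setD1; apply/negP => /and3P [_ _ /imsetP [x _ Ex]].
  have pD : pen \in fcomp jp ap x by rewrite -Ex fcomp_self.
  rewrite -(fcomp_eq Ij Ia pD) in Ex.
  have : s \in fcomp jp ap' pen by rewrite D1 dset inE fcomp_self.
  by rewrite Ex (negbTE sCt).
Qed.

End Main.

Section Part2.
Variable T : finType.
Variables (jp ap : T -> T) (lst pen : T).
Hypotheses (Ij : involutive jp) (Ia : involutive ap) (Fj : forall x, jp x != x) (Fa : forall x, ap x != x).
Variables (m : nat) (c : nat -> T).
Hypotheses (cf : forall a, a < m -> c (2*a).+1 = jp (c (2*a)))
  (cg : forall a, a.+1 < m -> c (2*a).+2 = ap (c (2*a).+1)) (cw : c 0 = ap (c (2*m).-1))
  (cinj : {in gtn (2*m) &, injective c}) (c0 : c 0 = lst) (c1 : c 1 = pen).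
Hypothesis m1 : 1 < m.

Let Ct := fcomp jp ap pen.
Let ac : acyc jp ap m c. Proof. split => //; lia. Qed.

Lemma CtE : Ct = cset (2*m) c.
Proof. by rewrite /Ct -c1 (acyc_comp Ij Ia ac) //; lia. Qed.

Lemma cneq i i' : i < 2*m -> i' < 2*m -> i != i' -> c i != c i'.
Proof. by move=> h1 h2 h3; apply/eqP => /cinj; rewrite !inE => /(_ h1 h2) /eqP; rewrite (negbTE h3). Qed.

Lemma cin i : i < 2*m -> c i \in Ct.
Proof. by move=> h; rewrite CtE cset_mem. Qed.

Lemma ap_odd a : a < m -> ap (c (2*a).+1) = c (if a.+1 < m then (2*a).+2 else 0).
Proof.
move=> am; case: ifP => h; first by rewrite cg.
have -> : (2*a).+1 = (2*m).-1 by lia.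
by rewrite cw.
Qed.


Lemma part_iia j : 1 <= j < m ->
  let ap' := tw (c (2*j).+1) pen ap in
  perm_eq (map (fun C : {set T} => #|C|) (enum (Kc jp ap')))
     ((#|Ct| - 2*j) :: 2*j :: rem #|Ct| (map (fun C : {set T} => #|C|) (enum (Kc jp ap))))
  /\ #|fcomp jp ap' pen| = #|Ct| - 2*j.
Proof.
move=> /andP [j1 jm] ap'.
have Ia' : involutive ap' by apply: tw_inv.
have ap'id : forall i, i < 2*m -> i != 1 -> i != (2*j).+1 ->
    forall i', i' < 2*m -> i' != 1 -> i' != (2*j).+1 -> ap (c i) = c i' -> ap' (c i) = c i'.
  move=> i im i1 ij i' i'm i'1 i'j E; rewrite /ap' tw_id ?E //.
  - by apply: cneq => //; lia.
  - by rewrite -c1; apply: cneq => //; lia.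
  - by apply: cneq => //; lia.
  - by rewrite -c1; apply: cneq => //; lia.
have ap'pen : ap' pen = c (if j.+1 < m then (2*j).+2 else 0).
  rewrite /ap' tw_v ap_odd //; case: ifP => h;
  (rewrite tperm_id //; [apply: cneq => //; lia | rewrite -c1; apply: cneq => //; lia]).
have ap'u : ap' (c (2*j).+1) = c 2.
  rewrite /ap' tw_u -c1 -(muln0 2) -cg // muln0 tperm_id //.
    by apply: cneq => //; lia.
  by rewrite c1 -c1; apply: cneq => //; lia.
pose d1 i := if i < 2 then c i else c (i + 2*j).
pose d2 i := c (i + 2).
have ad1 : acyc jp ap' (m - j) d1.
  split.
  - lia.
  - move=> a am; rewrite /d1; case: (posnP a) => [->|a0]; first by rewrite muln0 /=; have := @cf 0; rewrite muln0; apply; lia.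
    rewrite !ifN -?leqNgt; try lia.
    have -> : (2*a).+1 + 2*j = (2*(a+j)).+1 by lia.
    by rewrite cf ?mulnDr ?addnn //; lia.
  - move=> a am; rewrite /d1; case: (posnP a) => [->|a0].
      rewrite muln0 /= c1 ap'pen ifT; [congr c; lia | lia].
    rewrite !ifN -?leqNgt; try lia.
    have -> : (2*a).+2 + 2*j = (2*(a+j)).+2 by lia.
    have -> : (2*a).+1 + 2*j = (2*(a+j)).+1 by lia.
    symmetry; apply: ap'id; try lia; rewrite cg //; lia.
  - rewrite /d1 /=; case: (ltnP 1 (m - j)) => mj.
      rewrite ifN -?leqNgt; last lia.
      have -> : (2*(m-j)).-1 + 2*j = (2*m).-1 by lia.
      symmetry; apply: ap'id; try lia; by rewrite cw.
    rewrite ifT; last lia.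
    have -> : (2*(m-j)).-1 = 1 by lia.
    by rewrite c1 ap'pen ifF //; lia.
have ad2 : acyc jp ap' j d2.
  split.
  - lia.
  - move=> a am; rewrite /d2.
    have -> : (2*a).+1 + 2 = (2*a.+1).+1 by lia.
    have -> : (2*a) + 2 = (2*a.+1) by lia.
    by rewrite cf //; lia.
  - move=> a am; rewrite /d2.
    have -> : (2*a).+2 + 2 = (2*a.+1).+2 by lia.
    have -> : (2*a).+1 + 2 = (2*a.+1).+1 by lia.
    symmetry; apply: ap'id; try lia; rewrite cg //; lia.
  - rewrite /d2 /=.
    have -> : (2*j).-1 + 2 = (2*j).+1 by lia.
    by rewrite ap'u.
have cinj' : forall i i', i < 2*m -> i' < 2*m -> c i = c i' -> i = i'.
  by move=> i i' h1 h2 /cinj; rewrite !inE; apply.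
have d1inj : {in gtn (2*(m-j)) &, injective d1}.
  move=> i i'; rewrite !inE /d1 => h1 h2; do 2 case: ifP => ?;
  move/eqP; apply: contraTeq => ne; apply: cneq; lia.
have d2inj : {in gtn (2*j) &, injective d2}.
  move=> i i'; rewrite !inE /d2 => h1 h2;
  move/eqP; apply: contraTeq => ne; apply: cneq; lia.
have D1E : fcomp jp ap' pen = cset (2*(m-j)) d1.
  by rewrite -c1 -[c 1]/(d1 1) (acyc_comp Ij Ia' ad1) //; lia.
have D2E : fcomp jp ap' (c 2) = cset (2*j) d2.
  by rewrite -[c 2]/(d2 0) (acyc_comp Ij Ia' ad2) //; lia.
have cover : forall y, y \in Ct = (y \in cset (2*(m-j)) d1) || (y \in cset (2*j) d2).
  move=> y; rewrite CtE; apply/csetP/orP => [[i im ->]|[] /csetP [i im ->]].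
  - case: (ltnP i 2) => i2; first by left; apply/csetP; exists i => //; [lia | rewrite /d1 i2].
    case: (ltnP i (2*j).+2) => ij.
      by right; apply/csetP; exists (i - 2); [lia | rewrite /d2 subnK].
    left; apply/csetP; exists (i - 2*j); first lia.
    by rewrite /d1 ifN -?leqNgt ?subnK //; lia.
  - by rewrite /d1; case: ifP => h; [exists i | exists (i + 2*j)] => //; lia.
  - by exists (i + 2); [lia | rewrite /d2].
have compE : forall x, fcomp jp ap' x =
    if x \in cset (2*(m-j)) d1 then cset (2*(m-j)) d1
    else if x \in cset (2*j) d2 then cset (2*j) d2 else fcomp jp ap x.
  move=> x; case: ifP => x1.
    by move: x1 => /csetP [i im ->]; apply: acyc_comp.
  case: ifP => x2.
    by move: x2 => /csetP [i im ->]; apply: acyc_comp.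
  have xt : x \notin Ct by rewrite cover x1 x2.
  apply: fcomp_same => y yx; split => //.
  have [_ ayx] := fcomp_closed yx.
  have yt := fcomp_disj Ij Ia xt yx; have ayt := fcomp_disj Ij Ia xt ayx.
  have pen_in : pen \in Ct by rewrite -c1 cin //; lia.
  have u_in : c (2*j).+1 \in Ct by rewrite cin //; lia.
  rewrite /ap' tw_id //; apply/eqP => E.
  - by move: yt; rewrite E u_in.
  - by move: yt; rewrite E pen_in.
  - by move: ayt; rewrite E u_in.
  - by move: ayt; rewrite E pen_in.
have c0d2 : c 0 \notin cset (2*j) d2.
  apply/csetP => [[i im]]; rewrite /d2; apply/eqP; apply: cneq; lia.
have D12 : cset (2*(m-j)) d1 != cset (2*j) d2.
  apply: contraNneq c0d2 => <-; apply/csetP; exists 0 => //; lia.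
have KE : Kc jp ap' = cset (2*(m-j)) d1 |: (cset (2*j) d2 |: (Kc jp ap :\ Ct)).
  apply/setP => Z; rewrite !in_setU1 in_setD1; apply/imsetP/idP.
    move=> [x _ ->]; rewrite compE; case: ifP => x1; first by rewrite eqxx.
    case: ifP => x2; first by rewrite eqxx orbT.
    have xt : x \notin Ct by rewrite cover x1 x2.
    apply/orP; right; apply/orP; right; apply/andP; split.
      by apply: contraNneq xt => <-; exact: fcomp_self.
    by apply/imsetP; exists x.
  case/orP => [/eqP ->|/orP [/eqP ->|/andP [Zt /imsetP [x _ Zx]]]].
  - by exists pen.
  - by exists (c 2).
  have xt : x \notin Ct by apply: contra Zt => xt; rewrite Zx (fcomp_eq Ij Ia xt).
  exists x => //; move: xt; rewrite cover Zx compE => /norP [x1 x2].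
  by rewrite (negbTE x1) (negbTE x2).
have pen_d1 : pen \in cset (2*(m-j)) d1 by rewrite -D1E fcomp_self.
have c2_d2 : c 2 \in cset (2*j) d2 by rewrite -D2E fcomp_self.
have notK : forall (D : {set T}) (y : T), y \in D -> y \in Ct -> D \notin Kc jp ap :\ Ct.
  move=> D y yD yt; rewrite in_setD1; apply/negP => /andP [Dt /imsetP [x _ Ex]].
  have e1 : fcomp jp ap y = fcomp jp ap x by apply: fcomp_eq; rewrite // -Ex.
  have e2 : fcomp jp ap y = Ct by apply: fcomp_eq.
  by move: Dt; rewrite Ex -e1 e2 eqxx.
have cD1 : #|cset (2*(m-j)) d1| = #|Ct| - 2*j.
  rewrite !card_cset // CtE card_cset //; lia.
have cD2 : #|cset (2*j) d2| = 2*j by rewrite card_cset.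
have AK : Ct \in Kc jp ap by apply/imsetP; exists pen.
have c2t : c 2 \in Ct by rewrite cin //; lia.
have D2n := notK _ (c 2) c2_d2 c2t.
have D1n : cset (2*(m-j)) d1 \notin cset (2*j) d2 |: (Kc jp ap :\ Ct).
  rewrite in_setU1 negb_or D12 /=; apply: (notK _ pen pen_d1).
  by rewrite -c1 cin //; lia.
have P := perm_split (fun C : {set T} => #|C|) AK D2n D1n KE.
rewrite /= cD1 cD2 in P.
by split => //; rewrite D1E cD1.
Qed.

Lemma part_iib j : 1 <= j < m ->
  let ap' := tw (c (2*j)) pen ap in
  Kc jp ap' = Kc jp ap /\ fcomp jp ap' pen = Ct.
Proof.
move=> /andP [j1 jm] ap'.
have Ia' : involutive ap' by apply: tw_inv.
have ap'id : forall i, i < 2*m -> i != 1 -> i != 2*j ->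
    forall i', i' < 2*m -> i' != 1 -> i' != 2*j -> ap (c i) = c i' -> ap' (c i) = c i'.
  move=> i im i1 ij i' i'm i'1 i'j E; rewrite /ap' tw_id ?E //.
  - by apply: cneq => //; lia.
  - by rewrite -c1; apply: cneq => //; lia.
  - by apply: cneq => //; lia.
  - by rewrite -c1; apply: cneq => //; lia.
have apv : ap (c (2*j)) = c (2*j).-1.
  have -> : 2*j = (2*j.-1).+2 by lia.
  by rewrite cg ?Ia //; lia.
pose e i := if (2 <= i) && (i < 2*j) then (2*j).+1 - i else i.
pose d i := c (e i).
have ad : acyc jp ap' m d.
  split.
  - lia.
  - move=> a am; rewrite /d /e; case: (posnP a) => [->|a0].
      by rewrite muln0 /=; have := @cf 0; rewrite muln0; apply; lia.
    case: (ltnP a j) => aj.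
      rewrite !ifT; try lia.
      have -> : (2*j).+1 - (2*a) = (2*(j-a)).+1 by lia.
      by rewrite cf ?Ij; [congr c; lia | lia].
    by rewrite !ifF ?cf //; lia.
  - move=> a am; rewrite /d /e; case: (posnP a) => [->|a0].
      rewrite muln0 /= c1 /ap' tw_v apv.
      case: (ltnP 1 j) => j2.
        rewrite ifT; last lia.
        rewrite tperm_id; [congr c; lia | apply: cneq => //; lia | rewrite -c1; apply: cneq => //; lia].
      rewrite ifF; last lia.
      have -> : (2*j).-1 = 1 by lia.
      by rewrite c1 tpermR; congr c; lia.
    case: (ltngtP a.+1 j) => aj.
    + rewrite !ifT; try lia.
      symmetry; apply: ap'id; try lia.
      have -> : (2*j).+1 - (2*a).+1 = (2*(j-a-1)).+2 by lia.
      by rewrite cg ?Ia //; [congr c; lia | lia].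
    + rewrite !ifF; try lia.
      symmetry; apply: ap'id; try lia.
      by rewrite cg ?Ia //; lia.
    + rewrite ifF ?ifT; try lia.
      have -> : (2*j).+1 - (2*a).+1 = 2 by lia.
      have -> : (2*a).+2 = 2*j by lia.
      have a2 : ap (c 2) = pen by rewrite -c1 -[2]/((2*0).+2) cg ?Ia.
      rewrite /ap' /tw (@tperm_id _ _ _ (c 2)) ?a2 ?tpermR //.
      * by apply: cneq => //; lia.
      * by rewrite -c1; apply: cneq => //; lia.
  - rewrite /d /e /= ifF; last lia.
    symmetry; apply: ap'id; try lia.
    by rewrite cw.
have eb : forall i, i < 2*m -> e i < 2*m.
  by move=> i h; rewrite /e; case: ifP => [/andP [h1 h2]|_]; lia.
have ee : forall i, i < 2*m -> e (e i) = i.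
  move=> i h; rewrite /e; case: (boolP ((2 <= i) && (i < 2*j))) => [/andP [h1 h2]|h1].
    by rewrite ifT; [lia | apply/andP; split; lia].
  by rewrite (negbTE h1).
have dinj : {in gtn (2*m) &, injective d}.
  move=> i i'; rewrite !inE /d => h1 h2 E.
  have : e i = e i' by move: E; move/eqP; apply: contraTeq => ne; apply: cneq => //; apply: eb.
  by move=> E'; rewrite -(ee i h1) -(ee i' h2) E'.
have dset : cset (2*m) d = Ct.
  rewrite CtE; apply/setP => y; apply/csetP/csetP => [[i im ->]|[i im ->]].
    by exists (e i) => //; apply: eb.
  by exists (e i); [apply: eb | rewrite /d ee].
have DE : fcomp jp ap' pen = Ct.
  by rewrite -c1 -[c 1]/(d 1) (acyc_comp Ij Ia' ad) ?dset //; lia.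
have pen_in : pen \in Ct by rewrite -c1 cin //; lia.
have v_in : c (2*j) \in Ct by rewrite cin //; lia.
have compE : forall x, fcomp jp ap' x = if x \in Ct then Ct else fcomp jp ap x.
  move=> x; case: ifP => xt.
    by move: xt; rewrite -{1}dset => /csetP [i im ->]; rewrite (acyc_comp Ij Ia' ad).
  apply: fcomp_same => y yx; split => //.
  have [_ ayx] := fcomp_closed yx.
  have yt := fcomp_disj Ij Ia (negbT xt) yx; have ayt := fcomp_disj Ij Ia (negbT xt) ayx.
  rewrite /ap' tw_id //; apply/eqP => E.
  - by move: yt; rewrite E v_in.
  - by move: yt; rewrite E pen_in.
  - by move: ayt; rewrite E v_in.
  - by move: ayt; rewrite E pen_in.
split => //.
apply/setP => Z; apply/imsetP/imsetP => [[x _ ->]|[x _ ->]].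
  rewrite compE; case: ifP => xt; last by exists x.
  by exists pen.
case: (boolP (x \in Ct)) => xt.
  by exists pen => //; rewrite DE (fcomp_eq Ij Ia xt).
by exists x => //; rewrite compE (negbTE xt).
Qed.

End Part2.

Lemma Jm_rel n (x y : 'I_(2*n)) : Rel (Jm n) x y = (x != y) && (x %/ 2 == y %/ 2).
Proof.
rewrite /Rel; congr (_ && _); rewrite !divn2.
apply/exists_inP/eqP => [[e /imsetP [z _ ->] /andP []]|E].
  by rewrite !inE => /eqP -> /eqP ->.
by exists [set w : 'I_(2*n) | w./2 == x./2]; [apply/imsetP; exists x | rewrite !inE E eqxx].
Qed.

Lemma Jm_partner n : 0 < n ->
  exists f, [/\ forall x y, Rel (Jm n) x y = (y == f x), involutive f & forall x, f x != x].
Proof.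
move=> n0; apply: partner.
- move=> x; have h : x %/ 2 * 2 + (1 - x %% 2) < 2 * n by have := ltn_ord x; lia.
  exists (Ordinal h); rewrite Jm_rel; apply/andP; split.
    by apply/eqP => /(congr1 val) /=; lia.
  by apply/eqP => /=; lia.
- move=> x y z; rewrite !Jm_rel => /andP [/eqP h1 /eqP h2] /andP [/eqP h3 /eqP h4].
  apply: ord_inj; have : nat_of_ord x <> nat_of_ord y by move=> E; apply: h1; exact: ord_inj.
  have : nat_of_ord x <> nat_of_ord z by move=> E; apply: h3; exact: ord_inj.
  lia.
- by move=> x y; rewrite !Jm_rel eq_sym; congr (_ && _); rewrite eq_sym.
- by move=> x; rewrite Jm_rel eqxx.
Qed.

Unset Implicit Arguments.
Theorem lemma5p4 (n : nat) (pen lst : 'I_(2*n)) (A : {set {set 'I_(2*n)}}) :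
  0 < n ->
  val pen = (2*n - 2)%N ->  (* the vertex 2n-1 *)
  val lst = (2*n - 1)%N ->  (* the vertex 2n *)
  is_pm A ->
  (* (i) *)
  (forall s : 'I_(2*n), s \notin ucomp (Jm n) A pen ->
     let A' := mact (tperm s pen) A in
     perm_eq (parts A' (Jm n))
       ((#|ucomp (Jm n) A s| + #|ucomp (Jm n) A pen|)
          :: rem #|ucomp (Jm n) A s| (rem #|ucomp (Jm n) A pen| (parts (Jm n) A)))
     /\ #|ucomp A' (Jm n) pen| = (#|ucomp (Jm n) A s| + #|ucomp (Jm n) A pen|)%N)
  /\
  (* (ii): 2n, 2n-1, i_1, ..., i_{2k} is a cyclic traversal of C_t *)
  (forall (k : nat) (ii : seq 'I_(2*n)),
     size ii = (2*k)%N ->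
     uniq [:: lst, pen & ii] ->
     [set x in [:: lst, pen & ii]] = ucomp (Jm n) A pen ->
     path.cycle (ugraph (Jm n) A) [:: lst, pen & ii] ->
     forall j : nat, 1 <= j <= k ->
       (* (a) with i_{2j} = nth lst ii (2j-1) *)
       (let A' := mact (tperm (nth lst ii (2*j - 1)) pen) A in
        perm_eq (parts A' (Jm n))
          ((#|ucomp (Jm n) A pen| - 2*j) :: (2*j) :: rem #|ucomp (Jm n) A pen| (parts (Jm n) A))
        /\ #|ucomp A' (Jm n) pen| = (#|ucomp (Jm n) A pen| - 2*j)%N)
       /\
       (* (b) with i_{2j-1} = nth lst ii (2j-2) *)
       (let A' := mact (tperm (nth lst ii (2*j - 2)) pen) A in
        perm_eq (parts A' (Jm n)) (parts (Jm n) A)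
        /\ #|ucomp A' (Jm n) pen| = #|ucomp (Jm n) A pen|)).
Proof.
move=> n0 hpen hlst hA.
have [jp [HJ Ij Fj]] := Jm_partner n0.
have [ap [HA Ia Fa]] := pm_partner hA.
have jlst : jp lst = pen.
  apply/eqP; rewrite eq_sym -HJ Jm_rel; apply/andP; split.
    by apply/eqP => /(congr1 val); rewrite /= hpen hlst; lia.
  by rewrite hpen hlst; apply/eqP; lia.
have UC := ucomp_fcomp HJ HA.
have PK : parts (Jm n) A = map (fun C : {set 'I_(2*n)} => #|C|) (enum (Kc jp ap)).
  by rewrite /parts (comps_Kc HJ HA).
have twE : forall u x y, Rel (mact (tperm u pen) A) x y = (y == tw u pen ap x).
  by move=> u x y; rewrite (mact_partner _ HA) tpermV.
have UC' : forall u x, ucomp (mact (tperm u pen) A) (Jm n) x = fcomp jp (tw u pen ap) x.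
  by move=> u x; rewrite (ucomp_fcomp (twE u) HJ) fcompC.
have PK' : forall u, parts (mact (tperm u pen) A) (Jm n)
    = map (fun C : {set 'I_(2*n)} => #|C|) (enum (Kc jp (tw u pen ap))).
  move=> u; rewrite /parts (comps_Kc (twE u) HJ).
  have KC : Kc (tw u pen ap) jp = Kc jp (tw u pen ap).
    by apply/setP => Z; apply/imsetP/imsetP => [[x _ ->]|[x _ ->]]; exists x => //; rewrite fcompC.
  by rewrite KC.
split.
  move=> s sC A'; rewrite /A' PK' UC' !UC PK.
  rewrite UC in sC.
  exact: (part_i Ij Ia Fj Fa jlst sC).
move=> k ii sii uL _ cL j /andP [j1 jk].
set L := [:: lst, pen & ii] in uL cL *.
have sL : size L = 2 * k.+1 by rewrite /= sii; lia.
have cL' : path.cycle (fg jp ap) L.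
  by move: cL; rewrite /L /path.cycle (eq_path (ugraph_fg HJ HA)).
have [_ cf cg cw] := cycle_acyc Ij Ia (x0 := lst) sL ltac:(lia) uL cL' (esym jlst).
have cinj : {in gtn (2*k.+1) &, injective (nth lst L)}.
  by move=> i i'; rewrite !inE => h1 h2 /eqP; rewrite nth_uniq ?sL // => /eqP.
have c1 : nth lst L 1 = pen by [].
have jr : 0 < j < k.+1 by lia.
split.
  move=> A'; rewrite /A' PK' UC' !UC PK.
  have -> : nth lst ii (2*j - 1) = nth lst L (2*j).+1.
    by rewrite /L; have -> : (2*j).+1 = (2*j - 1).+2 by lia.
  exact: (part_iia Ij Ia cf cg cw cinj c1 ltac:(lia) jr).
move=> A'; rewrite /A' PK' UC' !UC PK.
have -> : nth lst ii (2*j - 2) = nth lst L (2*j).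
  have e : 2*j = (2*j - 2).+2 by lia.
  by rewrite /L {2}e.
have [-> ->] := part_iib Ij Ia cf cg cw cinj c1 ltac:(lia) jr.
by split.
Qed.
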